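(* Let $I=(G,t,t^* )$ be a boosted instance and $B=(q,\tau)$ a boost action with $\tau\ge t^*_q$. Let $\tau_0\ge0$ and let $S$ be an active component at time $\tau_0$ in shadow moat growing on the boosted fingerprint of $\mathrm{WithBoost}(I,B)$. If $q\notin S$ or $\tau\le\tau_0$, then there is an active component $S'$ at time $\tau_0$ in shadow moat growing on $(G,t^* )$ (the run for $I$) with $S'\subseteq S$.
   Context: $G=(V,E,c)$ is an undirected graph with edge costs $c\ge0$; $\delta(S)$ denotes the edges with exactly one endpoint in $S$. Shadow moat growing on $(G,s)$, for $s:V\to\mathbb{R}_{\ge0}$: continuous process in time maintaining a forest (initially empty), its components, and $y_S\ge0$ (initially $0$); at time $\tau$ a component $C$ is active iff some $w\in C$ has $s_w>\tau$, and each active $C$ increases $y_C$ at rate $1$; an edge $e$ between different components with $\sum_{S:e\in\delta(S)}y_S=c_e$ is added and the components merge (ties processed by a fixed rule); stop when nothing is active. A boosted instance is $I=(G,t,t^* )$ with $t,t^*:V\to\mathbb{R}_{\ge0}$ and $t^*\ge t$ pointwise; the run for $I$ is shadow moat growing on $(G,t^* )$. A boost action $B=(q,\tau)$, $\tau\ge t^*_q$, yields $\mathrm{WithBoost}(I,B)=(G,t,t^{*\prime})$ with $t^{*\prime}_q=\tau$ and $t^{*\prime}_v=t^*_v$ for $v\ne q$. *)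

(* Defs.v *)
(* Shadow moat growing, formalized as a relational
   characterization of a (discrete) event run of the continuous process. *)
From HB Require Import structures.
From mathcomp Require Import all_boot all_order all_algebra.
Set Implicit Arguments. Unset Strict Implicit. Unset Printing Implicit Defensive.
Import Order.TTheory GRing.Theory Num.Theory.
Local Open Scope ring_scope.

Section MoatDefs.
Variables (R : realFieldType) (V E : finType) (ends : E -> V * V).

Definition adj (F : seq E) : rel V := fun x y =>
  has (fun e => (((ends e).1 == x) && ((ends e).2 == y)) ||
                (((ends e).1 == y) && ((ends e).2 == x))) F.

Definition comp_of (F : seq E) (v : V) : {set V} := [set u | connect (adj F) v u].

Definition is_comp (F : seq E) (S : {set V}) : bool := [exists v, S == comp_of F v].

Definition crosses (e : E) (S : {set V}) : bool :=
  ((ends e).1 \in S) != ((ends e).2 \in S).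

(* A run is a list of (edge, time) pairs, in the order in which the edges
   are added (ties processed in list order). The forest at time sigma
   consists of the edges added at times <= sigma. *)
Definition forest_at (r : seq (E * R)) (sigma : R) : seq E :=
  [seq p.1 | p <- r & p.2 <= sigma].

(* max of s over S (s >= 0, so 0 as neutral element is harmless):
   a component S is active at time sigma iff sigma < smax s S. *)
Definition smax (s : V -> R) (S : {set V}) : R := \big[Num.max/0]_(w in S) s w.

Definition active_comp (s : V -> R) (r : seq (E * R)) (tau : R) (S : {set V}) : Prop :=
  is_comp (forest_at r tau) S /\ exists2 w, w \in S & tau < s w.

(* y_S at time tau = Lebesgue measure of
   { sigma in [0, tau) | S is an active component at time sigma },
   written out over the breakpoints 0 = a_0, a_1 <= ... <= a_k (event times)
   and a_{k+1} = +oo: on [a_j, a_{j+1}) the forest is forest_at r a_j. *)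
Definition ymoat (s : V -> R) (r : seq (E * R)) (S : {set V}) (tau : R) : R :=
  let bp := 0 :: [seq p.2 | p <- r] in
  \sum_(j < (size r).+1)
    (let lo := nth 0 bp j in
     let hi0 := Num.min tau (smax s S) in
     let hi := if (j.+1 < (size r).+1)%N then Num.min hi0 (nth 0 bp j.+1) else hi0 in
     if is_comp (forest_at r lo) S then Num.max 0 (hi - lo) else 0).

Definition load (s : V -> R) (r : seq (E * R)) (e : E) (tau : R) : R :=
  \sum_(S : {set V} | crosses e S) ymoat s r S tau.

Definition moat_run (c : E -> R) (s : V -> R) (r : seq (E * R)) : Prop :=
  [/\
      path <=%R 0 [seq p.2 | p <- r],
      (forall r1 e tau_e r2, r = r1 ++ (e, tau_e) :: r2 ->
          ~~ connect (adj [seq p.1 | p <- r1]) (ends e).1 (ends e).2 /\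
          load s r e tau_e = c e)
    & (* while something is active, every edge between different components
         (after processing all events up to sigma) is strictly non-tight *)
      (forall sigma, 0 <= sigma -> (exists w, sigma < s w) ->
          forall e, ~~ connect (adj (forest_at r sigma)) (ends e).1 (ends e).2 ->
          load s r e sigma < c e)].

Definition withBoost (tstar : V -> R) (q : V) (tau : R) : V -> R :=
  fun v => if v == q then tau else tstar v.

End MoatDefs.

(* Main.v *)
Require Import Defs.
From HB Require Import structures.
From mathcomp Require Import all_boot all_order all_algebra.
From mathcomp Require Import ring lra.
Import Order.TTheory GRing.Theory Num.Theory.
Local Open Scope ring_scope.

Module Helpers.
Set Implicit Arguments. Unset Strict Implicit. Unset Printing Implicit Defensive.

Section PartA.
Variable R : realFieldType.

Definition ind (b : bool) : R := if b then 1 else 0.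

Lemma ind_ge0 b : 0 <= ind b.
Proof. by case: b; rewrite /ind. Qed.

Fixpoint PS (e : seq R) (h : R -> R) : R :=
  match e with
  | x :: ((y :: _) as e') => (y - x) * h x + PS e' h
  | _ => 0
  end.

Lemma PS_cons2 x y e h : PS [:: x, y & e] h = (y - x) * h x + PS (y :: e) h.
Proof. by []. Qed.

Lemma PS_ge (e : seq R) b :
  (forall x, x \in e -> b <= x) -> PS e (fun x => ind (x < b)) = 0.
Proof.
elim: e => [|x [|y e] IH] Hb //.
rewrite PS_cons2 IH; last by move=> z Hz; apply: Hb; rewrite inE Hz orbT.
by rewrite /ind ltNge Hb ?mem_head //= mulr0 addr0.
Qed.

Lemma PS_lt (e : seq R) x0 b :
  path <=%R x0 e -> b \in x0 :: e -> PS (x0 :: e) (fun x => ind (x < b)) = b - x0.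
Proof.
elim: e x0 => [|y e IH] x0.
  by move=> _; rewrite inE => /eqP ->; rewrite subrr.
move=> /andP[Hxy Hp].
have Hall := order_path_min le_trans Hp.
have Hge : forall z, z \in y :: e -> x0 <= z.
  move=> z; rewrite inE => /orP[/eqP->//|Hz].
  by apply: le_trans Hxy _; move/allP: Hall => /(_ z Hz).
case: (eqVneq b x0) => [->|Hbx] Hb.
  rewrite PS_cons2 /ind ltxx mulr0 add0r subrr; apply: PS_ge => z Hz.
  exact: Hge.
rewrite inE (negbTE Hbx) /= in Hb.
rewrite PS_cons2 IH //.
have -> : x0 < b by rewrite lt_neqAle eq_sym Hbx Hge.
by rewrite mulr1 addrC addrA subrK.
Qed.

Lemma PS_sub (e : seq R) f g :
  PS e (fun x => f x - g x) = PS e f - PS e g.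
Proof.
case: e => [|x e]; first by rewrite /= subr0.
elim: e x => [|y e IH] x; first by rewrite /= subr0.
rewrite !PS_cons2 IH; ring.
Qed.

Lemma PS_scale (e : seq R) f a :
  PS e (fun x => a * f x) = a * PS e f.
Proof.
case: e => [|x e]; first by rewrite /= mulr0.
elim: e x => [|y e IH] x; first by rewrite /= mulr0.
rewrite !PS_cons2 IH; ring.
Qed.

Lemma PS_sum (I : Type) (r : seq I) (e : seq R) (h : I -> R -> R) :
  PS e (fun x => \sum_(i <- r) h i x) = \sum_(i <- r) PS e (h i).
Proof.
case: e => [|x e]; first by rewrite /= big1.
elim: e x => [|y e IH] x; first by rewrite /= big1.
by rewrite !PS_cons2 IH big_split /= mulr_sumr.
Qed.

Lemma PS_mono (e : seq R) f g :
  sorted <=%R e -> (forall x, f x <= g x) -> PS e f <= PS e g.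
Proof.
move=> + Hfg; case: e => [|x e] //.
elim: e x => [|y e IH] x //= /andP[Hxy Hp].
by rewrite lerD ?IH // ler_wpM2l // ?subr_ge0.
Qed.

Lemma PS_ext (e : seq R) f g : f =1 g -> PS e f = PS e g.
Proof.
move=> H; case: e => [|x e] //.
elim: e x => [|y e IH] x //.
by rewrite !PS_cons2 IH H.
Qed.

Definition Lg (a b : R) := Num.max 0 (b - a).

Lemma PS_int (e : seq R) a b : sorted <=%R e -> a \in e -> b \in e ->
  PS e (fun x => ind ((a <= x) && (x < b))) = Lg a b.
Proof.
case: e => [|x0 e] // Hs Ha Hb.
case: (leP a b) => Hab.
  rewrite (@PS_ext _ _ (fun x => ind (x < b) - ind (x < a))); last first.
    move=> x; rewrite /ind.
    by case: (leP a x) => ?; case: (ltP x b) => ?; case: (ltP x a) => ? /=; lra.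
  rewrite PS_sub !PS_lt // /Lg.
  by rewrite opprB addrA subrK max_r // subr_ge0.
rewrite (@PS_ext _ _ (fun x => 0 * ind (x < b))); last first.
  move=> x; rewrite mul0r /ind.
  by case: (leP a x) => ?; case: (ltP x b) => ? //=; lra.
rewrite PS_scale mul0r /Lg max_l // subr_le0 ltW //.
Qed.

Lemma interval_sum (I1 I2 : finType) (f : I1 -> R * R) (g : I2 -> R * R) :
  (forall x, \sum_i ind (((f i).1 <= x) && (x < (f i).2))
          <= \sum_i ind (((g i).1 <= x) && (x < (g i).2))) ->
  \sum_i Lg (f i).1 (f i).2 <= \sum_i Lg (g i).1 (g i).2.
Proof.
move=> H.
pose e := sort <=%R ([seq (f i).1 | i <- enum I1] ++ [seq (f i).2 | i <- enum I1]
          ++ [seq (g i).1 | i <- enum I2] ++ [seq (g i).2 | i <- enum I2]).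
have Hs : sorted <=%R e by apply: sort_sorted; exact: le_total.
have Hf1 i : (f i).1 \in e.
  by rewrite mem_sort !mem_cat; apply/orP; left; apply/mapP; exists i; rewrite ?mem_enum.
have Hf2 i : (f i).2 \in e.
  rewrite mem_sort !mem_cat; apply/orP; right; apply/orP; left.
  by apply/mapP; exists i; rewrite ?mem_enum.
have Hg1 i : (g i).1 \in e.
  rewrite mem_sort !mem_cat; apply/orP; right; apply/orP; right; apply/orP; left.
  by apply/mapP; exists i; rewrite ?mem_enum.
have Hg2 i : (g i).2 \in e.
  rewrite mem_sort !mem_cat; apply/orP; right; apply/orP; right; apply/orP; right.
  by apply/mapP; exists i; rewrite ?mem_enum.
rewrite (eq_bigr (fun i => PS e (fun x => ind (((f i).1 <= x) && (x < (f i).2))))); last first.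
  by move=> i _; rewrite PS_int.
rewrite [X in _ <= X](eq_bigr (fun i => PS e (fun x => ind (((g i).1 <= x) && (x < (g i).2))))); last first.
  by move=> i _; rewrite PS_int.
rewrite -!PS_sum; exact: PS_mono.
Qed.
End PartA.
Arguments ind {R} b.

Section PartB.
Variables (R : realFieldType) (V E : finType) (ends : E -> V * V).
Local Notation ind := (@ind R).

Definition pc (b : seq R) j x :=
  (nth 0 b j <= x) && ((j.+1 < size b)%N ==> (x < nth 0 b j.+1)).

Lemma piece_sum (ts : seq R) b0 x : path <=%R b0 ts ->
  \sum_(0 <= j < size (b0 :: ts)) ind (pc (b0 :: ts) j x) = ind (b0 <= x).
Proof.
elim: ts b0 => [|b1 ts IH] b0.
  by move=> _; rewrite /= big_nat1 /pc /= andbT.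
move=> /andP[H01 Hp].
rewrite /= big_nat_recl // -/(size (b1 :: ts)).
rewrite (eq_bigr (fun j => ind (pc (b1 :: ts) j x))) //.
rewrite IH // /pc /=.
by rewrite /ind; case: (leP b0 x) => ?; case: (ltP x b1) => ? /=; lra.
Qed.

Lemma sorted_bp_ge0 (ts : seq R) y : path <=%R 0 ts -> y \in (0 :: ts) -> 0 <= y.
Proof.
move=> Hp; rewrite inE => /orP[/eqP->//|Hy].
by move/allP: (order_path_min le_trans Hp) => /(_ y Hy).
Qed.

Lemma forest_pc (r : seq (E * R)) j x :
  path <=%R 0 [seq p.2 | p <- r] -> (j < (size r).+1)%N -> pc (0 :: [seq p.2 | p <- r]) j x ->
  forest_at r (nth 0 (0 :: [seq p.2 | p <- r]) j) = forest_at r x.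
Proof.
set bp := 0 :: _ => Hp Hj /andP[Hlo Hhi].
have {}Hj : (j < size bp)%N by rewrite /= size_map.
have Hs : sorted <=%R bp by [].
rewrite /forest_at; congr map; apply: eq_in_filter => p Hpr.
have Hin : p.2 \in bp by rewrite inE; apply/orP; right; apply/mapP; exists p.
set i := index p.2 bp.
have Hi : (i < size bp)%N by rewrite index_mem.
have Hni : nth 0 bp i = p.2 by rewrite nth_index.
case: (leqP i j) => Hij.
  have : nth 0 bp i <= nth 0 bp j by apply: le_sorted_leq_nth.
  rewrite Hni => H; rewrite H (le_trans H Hlo) //.
have Hj1 : (j.+1 < size bp)%N by apply: leq_ltn_trans Hij Hi.
rewrite Hj1 /= in Hhi.
have : nth 0 bp j.+1 <= nth 0 bp i by apply: le_sorted_leq_nth.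
rewrite Hni => H.
have Hx : x < p.2 by apply: lt_le_trans Hhi H.
by rewrite !leNgt Hx (le_lt_trans Hlo Hx).
Qed.
Definition iv (s : V -> R) (r : seq (E * R)) (e : E) (sg : R)
  (p : {set V} * 'I_(size r).+1) : R * R :=
  let S := p.1 in let j := nat_of_ord p.2 in
  let bp := 0 :: [seq q.2 | q <- r] in
  let lo := nth 0 bp j in
  let hi0 := Num.min sg (smax s S) in
  let hi := if (j.+1 < (size r).+1)%N then Num.min hi0 (nth 0 bp j.+1) else hi0 in
  if crosses ends e S && is_comp ends (forest_at r lo) S then (lo, hi) else (0, 0).

Arguments iv s r e sg p : clear implicits.
Lemma load_iv s r e sg :
  load ends s r e sg = \sum_p Lg (iv s r e sg p).1 (iv s r e sg p).2.
Proof.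
rewrite [RHS](eq_bigr (fun p => Lg (iv s r e sg (p.1, p.2)).1 (iv s r e sg (p.1, p.2)).2)); last by case.
rewrite -(pair_bigA _ (fun S j => Lg (iv s r e sg (S, j)).1 (iv s r e sg (S, j)).2)).
rewrite /load big_mkcond /=.
apply: eq_bigr => S _; rewrite /ymoat.
case Hc: (crosses ends e S).
  apply: eq_bigr => j _; rewrite /iv /= Hc /=.
  by case: (is_comp _ _ _) => //; rewrite /Lg subrr maxxx.
by rewrite big1 // => j _; rewrite /iv /= Hc /= /Lg subrr maxxx.
Qed.

Lemma cnt_iv s r e sg x : path <=%R 0 [seq p.2 | p <- r] ->
  \sum_p ind (((iv s r e sg p).1 <= x) && (x < (iv s r e sg p).2)) =
  \sum_(S : {set V}) ind [&& 0 <= x, x < sg, crosses ends e S,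
                            is_comp ends (forest_at r x) S & x < smax s S].
Proof.
move=> Hp.
rewrite (eq_bigr (fun p => ind (((iv s r e sg (p.1, p.2)).1 <= x) && (x < (iv s r e sg (p.1, p.2)).2)))); last by case.
rewrite -(pair_bigA _ (fun S j => ind (((iv s r e sg (S, j)).1 <= x) && (x < (iv s r e sg (S, j)).2)))).
apply: eq_bigr => S _.
set bp := 0 :: [seq p.2 | p <- r].
set C := [&& 0 <= x, _, _, _ & _].
rewrite (eq_bigr (fun j : 'I_(size r).+1 => ind C * ind (pc bp j x))); last first.
  move=> j _; rewrite /iv /= -/bp.
  have Hj : (j < (size r).+1)%N by [].
  have Hsz : size bp = (size r).+1 by rewrite /= size_map.
  case: (boolP (pc bp j x)) => Hpc.
    have Hf := forest_pc Hp Hj Hpc; rewrite -/bp in Hf; rewrite Hf.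
    have H0 : 0 <= nth 0 bp j.
      by apply: (sorted_bp_ge0 Hp); apply: mem_nth; rewrite Hsz.
    move: Hpc; rewrite /pc Hsz => /andP[Hlo Hhi].
    have Hx0 : 0 <= x by apply: le_trans H0 Hlo.
    rewrite /C Hx0 mulr1 /=.
    case: (crosses _ _ _); case: (is_comp _ _ _) => /=; rewrite ?(ltNge x 0) ?Hx0 ?andbF //.
    rewrite Hlo /=.
    case: ifP => Hc; rewrite ?lt_min.
      by rewrite Hc /= in Hhi; rewrite Hhi !andbT andbC.
    by rewrite andbC.
  rewrite mulr0.
  move: Hpc; rewrite /pc Hsz negb_and negb_imply => Hpc.
  case: (crosses _ _ _); case: (is_comp _ _ _) => //=; rewrite /ind ?ltxx ?andbF //;
    try by (case: ifP => // /andP[] ? ?; lra).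
  case: (leP (nth 0 bp j) x) => Hlo //=.
  rewrite Hlo /= in Hpc; move/andP: Hpc => [Hc Hnx].
  by rewrite Hc !lt_min (negbTE Hnx) !andbF.
have -> : \sum_(i < (size r).+1) (ind C * ind (pc bp i x)) = ind C * \sum_(i < (size r).+1) ind (pc bp i x).
  by rewrite mulr_sumr.
rewrite -(big_mkord xpredT (fun j => ind (pc bp j x))).
have := piece_sum x Hp; rewrite /= size_map => ->.
rewrite /C /ind; case: (leP 0 x) => //= _; rewrite ?mulr1 ?mulr0 //.
Qed.

End PartB.

Section PartC.
Variables (R : realFieldType) (V E : finType) (ends : E -> V * V).
Local Notation ind := (@ind R).

Lemma adj_sym F : symmetric (adj ends F).
Proof.
move=> a b; rewrite /adj; apply: eq_has => e' /=; by rewrite orbC.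
Qed.

Lemma csym F : connect_sym (adj ends F).
Proof. exact: sym_connect_sym (adj_sym F). Qed.

Lemma comp_eq F a b : connect (adj ends F) a b -> comp_of ends F a = comp_of ends F b.
Proof.
move=> H; apply/setP => z; rewrite !inE.
exact: (same_connect (csym F) H).
Qed.

Lemma is_comp_cross F e S : is_comp ends F S -> crosses ends e S ->
  S = comp_of ends F (ends e).1 \/ S = comp_of ends F (ends e).2.
Proof.
move=> /existsP[w /eqP ->]; rewrite /crosses !inE.
case Hu: (connect _ w _); case Hv: (connect _ w _) => //= _.
  by left; apply: comp_eq.
by right; apply: comp_eq.
Qed.

Lemma comp_in F v : v \in comp_of ends F v.
Proof. by rewrite inE connect0. Qed.

Lemma sum_ind_eq (A : {set V}) : \sum_(S : {set V}) ind (S == A) = 1.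
Proof.
by rewrite (bigD1 A) //= big1 ?addr0 /ind ?eqxx // => S /negbTE ->.
Qed.

Lemma cnt_le F e (Q : {set V} -> bool) :
  \sum_(S : {set V}) ind [&& crosses ends e S, is_comp ends F S & Q S]
  <= ind (Q (comp_of ends F (ends e).1)) + ind (Q (comp_of ends F (ends e).2)).
Proof.
set A := comp_of ends F (ends e).1; set B := comp_of ends F (ends e).2.
apply: (@le_trans _ _ (\sum_(S : {set V}) (ind (S == A) * ind (Q A) + ind (S == B) * ind (Q B)))).
  apply: ler_sum => S _.
  case Hc: (crosses _ _ _); case Hi: (is_comp _ _ _) => /=;
    try by (apply: addr_ge0; apply: mulr_ge0; exact: ind_ge0).
  case: (is_comp_cross Hi Hc) => ->.
    rewrite eqxx /ind /=; case: (Q A); case: (A == B) => //=; case: (Q B); lra.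
  rewrite eqxx /ind /=; case: (Q B); case: (B == A) => //=; case: (Q A); lra.
rewrite big_split /= -!mulr_suml !sum_ind_eq !mul1r //.
Qed.
Lemma cnt_ge F e (Q : {set V} -> bool) :
  ~~ connect (adj ends F) (ends e).1 (ends e).2 ->
  ind (Q (comp_of ends F (ends e).1)) + ind (Q (comp_of ends F (ends e).2))
  <= \sum_(S : {set V}) ind [&& crosses ends e S, is_comp ends F S & Q S].
Proof.
move=> Hnc.
set A := comp_of ends F (ends e).1; set B := comp_of ends F (ends e).2.
have HvA : (ends e).2 \notin A by rewrite inE.
have HuB : (ends e).1 \notin B by rewrite inE (csym F).
have HBA : B != A by apply/eqP => HAB; move: HvA; rewrite -HAB comp_in.
have HcA : crosses ends e A by rewrite /crosses comp_in (negbTE HvA).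
have HcB : crosses ends e B by rewrite /crosses comp_in (negbTE HuB).
have HiA : is_comp ends F A by apply/existsP; exists (ends e).1.
have HiB : is_comp ends F B by apply/existsP; exists (ends e).2.
rewrite (bigD1 A) //= (bigD1 B) /=; last by [].
rewrite HcA HiA HcB HiB /= addrA lerDl.
by apply: sumr_ge0 => S _; exact: ind_ge0.
Qed.

Lemma forest_mono (r : seq (E * R)) y z : y <= z ->
  {subset forest_at r y <= forest_at r z}.
Proof.
move=> Hyz e' /mapP[p]; rewrite mem_filter => /andP[Hp Hpr] ->.
by apply/mapP; exists p => //; rewrite mem_filter Hpr (le_trans Hp Hyz).
Qed.

Lemma connect_edges (F F' : seq E) :
  (forall e', e' \in F -> connect (adj ends F') (ends e').1 (ends e').2) ->
  subrel (connect (adj ends F)) (connect (adj ends F')).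
Proof.
move=> H; apply: connect_sub => a b /hasP[e' He' /orP[] /andP[/eqP Ha /eqP Hb]].
  by rewrite -Ha -Hb; apply: H.
by rewrite (csym F') -Ha -Hb; apply: H.
Qed.

Lemma adj_mono (F F' : seq E) : {subset F <= F'} ->
  subrel (connect (adj ends F)) (connect (adj ends F')).
Proof.
move=> Hs; apply: connect_edges => e' He'; apply: connect1.
by apply/hasP; exists e'; [apply: Hs | rewrite !eqxx].
Qed.

Lemma smax_lt (s : V -> R) (A : {set V}) x : 0 <= x -> x < smax s A -> exists2 w, w \in A & x < s w.
Proof.
move=> Hx; rewrite /smax.
elim/big_rec: _ => [|w m Hw IH]; first by rewrite ltNge Hx.
rewrite lt_max => /orP[H|H]; [by exists w | exact: IH].
Qed.

Lemma smax_gt (s : V -> R) (A : {set V}) x w : w \in A -> x < s w -> x < smax s A.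
Proof.
move=> Hw Hx; apply: (lt_le_trans Hx); rewrite /smax.
exact: (le_bigmax_cond _ (fun w => s w) Hw).
Qed.

Lemma smax_mono (s s' : V -> R) (A B : {set V}) x : 0 <= x -> (forall v, s v <= s' v) ->
  A \subset B -> x < smax s A -> x < smax s' B.
Proof.
move=> Hx Hss HAB /(smax_lt Hx)[w Hw Hxw].
apply: (smax_gt (w := w)); first by apply: (subsetP HAB).
exact: lt_le_trans Hxw (Hss w).
Qed.

End PartC.

Section PartD.
Variables (R : realFieldType) (V E : finType) (ends : E -> V * V).
Local Notation ind := (@ind R).

Lemma coarse (c : E -> R) (so sb : V -> R) (ro rb : seq (E * R)) (x0 : R) (w : V) :
  path <=%R 0 [seq p.2 | p <- ro] ->
  path <=%R 0 [seq p.2 | p <- rb] ->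
  (forall r1 e tau_e r2, ro = r1 ++ (e, tau_e) :: r2 -> load ends so ro e tau_e = c e) ->
  (forall sigma, 0 <= sigma -> (exists w, sigma < sb w) -> forall e,
      ~~ connect (adj ends (forest_at rb sigma)) (ends e).1 (ends e).2 ->
      load ends sb rb e sigma < c e) ->
  (forall v, so v <= sb v) -> x0 < so w ->
  forall n r1 e tau_e r2, (size r1 < n)%N -> ro = r1 ++ (e, tau_e) :: r2 -> tau_e <= x0 ->
  connect (adj ends (forest_at rb tau_e)) (ends e).1 (ends e).2.
Proof.
move=> Hpo Hpb H2 H3 Hs Hw.
elim=> [|n IH] r1 e te r2 //= Hsz Hro Hte.
have Hsrt : sorted <=%R ([seq p.2 | p <- r1] ++ te :: [seq p.2 | p <- r2]).
  have : sorted <=%R (0 :: [seq p.2 | p <- ro]) by [].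
  by rewrite Hro map_cat /= => /path_sorted.
have Hte0 : 0 <= te.
  apply: (sorted_bp_ge0 Hpo); rewrite inE Hro map_cat mem_cat /= inE eqxx !orbT //.
have Hafter : forall p, p \in (e, te) :: r2 -> te <= p.2.
  move=> p; rewrite inE => /orP[/eqP->//|Hp].
  have := (cat_sorted2 Hsrt).2 => /= /(order_path_min le_trans) /allP; apply.
  by apply/mapP; exists p.
have Hco : forall y, y < te ->
    subrel (connect (adj ends (forest_at ro y))) (connect (adj ends (forest_at rb y))).
  move=> y Hy; apply: connect_edges => e' /mapP[p]; rewrite mem_filter => /andP[Hpy Hp] ->.
  have Hp1 : p \in r1.
    move: Hp; rewrite Hro mem_cat => /orP[//|Hp].
    by move: (le_trans (Hafter p Hp) Hpy); rewrite leNgt Hy.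
  case/splitPr: Hp1 Hro Hsz => r1a r1b Hro Hsz.
  apply: (adj_mono (forest_mono (r:=rb) Hpy)).
  apply: (IH r1a p.1 p.2 (r1b ++ (e, te) :: r2)).
  - by rewrite size_cat /= addnS ltnS in Hsz; apply: leq_ltn_trans (leq_addr _ _) Hsz.
  - by rewrite Hro -catA /= -surjective_pairing.
  - exact: le_trans Hpy (le_trans (ltW Hy) Hte).
apply/idPn => Hnc.
have Hlt := H3 te Hte0 (ex_intro _ w (le_lt_trans Hte (lt_le_trans Hw (Hs w)))) e Hnc.
have Heq := H2 r1 e te r2 Hro.
have : load ends so ro e te <= load ends sb rb e te.
  rewrite !load_iv; apply: interval_sum => x; rewrite !cnt_iv //.
  case: (boolP ((0 <= x) && (x < te))) => [/andP[Hx0 Hxt]|Hn]; last first.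
    rewrite big1; first by apply: sumr_ge0 => S _; exact: ind_ge0.
    by move=> S _; move: Hn; rewrite negb_and => /orP[] /negbTE ->; rewrite /ind //= andbF.
  rewrite (eq_bigr (fun S => ind [&& crosses ends e S, is_comp ends (forest_at ro x) S & x < smax so S])); last by move=> S _; rewrite Hx0 Hxt.
  rewrite [X in _ <= X](eq_bigr (fun S => ind [&& crosses ends e S, is_comp ends (forest_at rb x) S & x < smax sb S])); last by move=> S _; rewrite Hx0 Hxt.
  apply: le_trans; first exact: cnt_le.
  apply: le_trans; last first.
    apply: cnt_ge; apply: contra Hnc; apply: adj_mono; exact: (forest_mono (r:=rb) (ltW Hxt)).
  apply: lerD; rewrite /ind; case: ifP => Hq; try by case: ifP.
    rewrite (smax_mono Hx0 Hs _ Hq) //.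
    by apply/subsetP => z; rewrite !inE => Hz; exact: (Hco x Hxt _ _ Hz).
  rewrite (smax_mono Hx0 Hs _ Hq) //.
  by apply/subsetP => z; rewrite !inE => Hz; exact: (Hco x Hxt _ _ Hz).
by rewrite Heq => Hle; move: (le_lt_trans Hle Hlt); rewrite ltxx.
Qed.

End PartD.

End Helpers.
Import Helpers.

Theorem mainTheorem15 (R : realFieldType) (V E : finType) (ends : E -> V * V)
    (c : E -> R) (t tstar : V -> R) (q : V) (tau tau0 : R)
    (r_boost r_orig : seq (E * R)) (S : {set V}) :
  (forall e, 0 <= c e) ->
  (forall v, 0 <= t v) ->
  (forall v, t v <= tstar v) ->
  tstar q <= tau ->
  0 <= tau0 ->
  moat_run ends c (withBoost tstar q tau) r_boost ->
  moat_run ends c tstar r_orig ->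
  active_comp ends (withBoost tstar q tau) r_boost tau0 S ->
  (q \notin S \/ tau <= tau0) ->
  exists2 S' : {set V}, active_comp ends tstar r_orig tau0 S' & S' \subset S.
Proof.
move=> _ _ _ Hq Htau0 [Hpb H2b H3b] [Hpo H2o H3o] [HisS [w HwS Hw]] Hcase.
have Hs : forall v, tstar v <= withBoost tstar q tau v.
  by move=> v; rewrite /withBoost; case: eqP => [->|].
have Hw' : tau0 < tstar w.
  move: Hw; rewrite /withBoost; case: eqP => [Hwq|//] Hlt.
  case: Hcase => [HqS|Hle].
    by move: HqS; rewrite -Hwq HwS.
  by move: (lt_le_trans Hlt Hle); rewrite ltxx.
have H2o' : forall r1 e tau_e r2, r_orig = r1 ++ (e, tau_e) :: r2 ->
    load ends tstar r_orig e tau_e = c e.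
  by move=> r1 e te r2 H; case: (H2o r1 e te r2 H).
have Hco : subrel (connect (adj ends (forest_at r_orig tau0)))
                  (connect (adj ends (forest_at r_boost tau0))).
  apply: connect_edges => e' /mapP[p]; rewrite mem_filter => /andP[Hpy Hp] ->.
  case/splitPr Hro: {1}r_orig / Hp => [r1 r2].
  apply: (adj_mono (forest_mono (r:=r_boost) Hpy)).
  apply: (coarse Hpo Hpb H2o' H3b Hs Hw' (n := (size r1).+1) (r1 := r1) (r2 := r2)) => //.
  by rewrite Hro -surjective_pairing.
exists (comp_of ends (forest_at r_orig tau0) w).
  split; first by apply/existsP; exists w.
  by exists w => //; exact: comp_in.
case/existsP: HisS => w0 /eqP HS.
have HSw : S = comp_of ends (forest_at r_boost tau0) w.
  by rewrite HS; apply: comp_eq; move: HwS; rewrite HS inE.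
rewrite HSw; apply/subsetP => z; rewrite !inE => Hz; exact: (Hco _ _ Hz).
Qed.
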